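(* No randomized strategyproof mechanism for locating an obnoxious facility on $[0,1]$ has an approximation ratio better than $\sqrt{6/5}$ for the geometric mean of utilities.
   Context: Agents $i=1,\dots,n$ have private locations $x_i\in[0,1]$. A randomized mechanism $f$ maps each reported profile to a distribution over $[0,1]$; agent $i$'s utility from distribution $\pi$ is $\mathbb E_{y\sim\pi}|x_i-y|$, and $f$ is strategyproof if no agent can increase this expected utility by misreporting. The objective of $y$ is the geometric mean $\big(\prod_i|x_i-y|\big)^{1/n}$, and the mechanism's value is its expectation under $f(\mathbf x)$. The approximation ratio is the supremum over all numbers of agents and profiles of (optimal objective over deterministic $z\in[0,1]$)/(mechanism's value). *)

(* Defs.v *)
From HB Require Import structures.
From mathcomp Require Import all_boot all_order all_algebra.
From mathcomp Require Import all_classical all_reals all_analysis.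
Set Implicit Arguments. Unset Strict Implicit. Unset Printing Implicit Defensive.
Import Order.TTheory GRing.Theory Num.Theory.
Local Open Scope classical_set_scope.
Local Open Scope ring_scope.

Definition profile (R : realType) (n : nat) := 'I_n -> R.

Definition valid_profile (R : realType) n (x : profile R n) : Prop :=
  forall i, 0 <= x i <= 1.

Definition mechanism (R : realType) :=
  forall n : nat, profile R n -> probability R R.

Definition mech_on_unit (R : realType) (f : mechanism R) : Prop :=
  forall n (x : profile R n), valid_profile x ->
    f n x `[0%R, 1%R]%classic = 1%E.

Definition exp_util (R : realType) (pi : probability R R) (t : R) : \bar R :=
  (\int[pi]_(y in `[0%R, 1%R]%classic) (`|t - y|)%:E)%E.

Definition upd (R : realType) n (x : profile R n) (i : 'I_n) (v : R) : profile R n :=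
  fun j => if j == i then v else x j.

Definition strategyproof (R : realType) (f : mechanism R) : Prop :=
  forall n (x : profile R n) (i : 'I_n) (v : R),
    valid_profile x -> 0 <= v <= 1 ->
    (exp_util (f n (upd x i v)) (x i) <= exp_util (f n x) (x i))%E.

Definition geo_mean (R : realType) n (x : profile R n) (y : R) : R :=
  (\prod_(i < n) `|x i - y|) `^ (n%:R^-1).

Definition mech_value (R : realType) (f : mechanism R) n (x : profile R n) : \bar R :=
  (\int[f n x]_(y in `[0%R, 1%R]%classic) (geo_mean x y)%:E)%E.

(* Since the optimum is attained and is
   positive, this is equivalent to sup OPT/value <= rho. *)
Definition approx_at_most (R : realType) (f : mechanism R) (rho : R) : Prop :=
  forall n (x : profile R n), (0 < n)%N -> valid_profile x ->
    forall z : R, 0 <= z <= 1 ->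
      ((geo_mean x z)%:E <= rho%:E * mech_value f x)%E.

(* Main.v *)
Require Import Defs.
From mathcomp Require Import all_boot all_order all_algebra.
From mathcomp Require Import all_classical all_reals all_analysis.
From mathcomp Require Import lra.
From mathcomp Require measurable_realfun.
Import Order.TTheory GRing.Theory Num.Theory.
Local Open Scope ring_scope.

Lemma sqrt_le_aux (R : realType) (a b : R) : 0 <= b -> a <= b ^+ 2 -> Num.sqrt a <= b.
Proof.
move=> b0 ab.
have -> : b = Num.sqrt (b ^+ 2) by rewrite sqrtr_sqr ger0_norm.
by rewrite ler_sqrt // sqr_ge0.
Qed.

Lemma key_ineq (R : realType) (y : R) : 0 <= y <= 1 ->
  forall a c : R, a = `|3/4 - y| -> c = `|1/4 - y| ->
  Num.sqrt (y * a) <= 9/25 + 19/100 * c.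
Proof.
move=> /andP[y0 y1] a c Ha Hc.
have a0 : 0 <= c by rewrite Hc.
apply: sqrt_le_aux.
  by apply: addr_ge0 => //; apply: mulr_ge0.
have [h1|h1] := lerP y (1/4); have [h2|h2] := lerP y (3/4).
- have ea : a = 3/4 - y by rewrite Ha; apply: ger0_norm; lra.
  have ec : c = 1/4 - y by rewrite Hc; apply: ger0_norm; lra.
  have hh : 0 <= (1/4 - y) * y by apply: mulr_ge0; lra.
  rewrite ea ec; nra.
- lra.
- have ea : a = 3/4 - y by rewrite Ha; apply: ger0_norm; lra.
  have ec : c = - (1/4 - y) by rewrite Hc; apply: ler0_norm; lra.
  have hh := sqr_ge0 (y - 61/200).
  rewrite ea ec; nra.
- have ea : a = - (3/4 - y) by rewrite Ha; apply: ler0_norm; lra.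
  have ec : c = - (1/4 - y) by rewrite Hc; apply: ler0_norm; lra.
  have hh : 0 <= (y - 3/4) * (1 - y) by apply: mulr_ge0; lra.
  rewrite ea ec; nra.
Qed.


Import measurable_realfun.

Definition dst {R : realType} (t y : R) : R := `|t - y|.

Section Main.
Variable R : realType.
Local Notation D := (`[0%R, 1%R]%classic : set R).

Lemma mD : measurable D.
Proof. exact: measurable_itv. Qed.

Lemma mabs (t : R) : measurable_fun D (dst t).
Proof.
have hB := measurable_realfun.measurable_funB (measurable_cst t) (@measurable_id _ _ D).
exact: (measurableT_comp (@measurable_realfun.normr_measurable R setT) hB).
Qed.

Lemma inD (y : R) : D y -> 0 <= y <= 1.
Proof. by rewrite /= in_itv. Qed.


Local Open Scope ereal_scope.

Lemma int_lin (mu : probability R R) (g : R -> R) (t a b : R) :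
  mu D = 1 -> (0 <= a)%R -> (0 <= b)%R -> measurable_fun D g ->
  (forall y, (0 <= y <= 1)%R -> (0 <= g y <= a + b * dst t y)%R) ->
  \int[mu]_(y in D) (g y)%:E <= a%:E + b%:E * \int[mu]_(y in D) (dst t y)%:E.
Proof.
move=> mu1 a0 b0 mg hg.
have mdt : measurable_fun D (fun y => (dst t y)%:E).
  by apply/measurable_realfun.measurable_EFinP; exact: mabs.
apply: (@le_trans _ _ (\int[mu]_(y in D) (a + b * dst t y)%:E)).
  apply: (ge0_le_integral mu mD (f1 := fun y => (g y)%:E) (f2 := fun y => (a + b * dst t y)%:E)).
  - by move=> y /inD /hg /andP[? _]; rewrite lee_fin.
  - by apply/measurable_realfun.measurable_EFinP.
  - apply/measurable_realfun.measurable_EFinP; apply: measurable_realfun.measurable_funD => //.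
    apply: measurable_realfun.measurable_funM => //; exact: mabs.
  - by move=> y /inD /hg /andP[_ ?]; rewrite lee_fin.
rewrite (eq_integral (fun y => a%:E + b%:E * (dst t y)%:E)); last first.
  by move=> y _; rewrite EFinD EFinM.
rewrite (ge0_integralD mu mD (f1 := fun y => a%:E) (f2 := fun y => b%:E * (dst t y)%:E)).
- rewrite (integral_cst mu mD) [X in (_ * X)%E](_ : _ = 1%E); last exact: mu1.
  rewrite mule1.
  rewrite (ge0_integralZl_EFin mu mD (f1 := fun y => (dst t y)%:E)).
  + exact: lexx.
  + by move=> y _; rewrite lee_fin; exact: normr_ge0.
  + exact: mdt.
  + exact: b0.
- by move=> y _; rewrite lee_fin.
- exact: measurable_cst.
- by move=> y _; rewrite -EFinM lee_fin; apply: mulr_ge0 => //; exact: normr_ge0.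
- have h1 := measurable_realfun.measurable_funM (measurable_cst b) (mabs t).
  have h := proj2 (measurable_realfun.measurable_EFinP _ _) h1.
  exact h.
Qed.

Lemma int_le1 (mu : probability R R) (g : R -> R) :
  mu D = 1 -> measurable_fun D g ->
  (forall y, (0 <= y <= 1)%R -> (0 <= g y <= 1)%R) ->
  0 <= \int[mu]_(y in D) (g y)%:E <= 1.
Proof.
move=> mu1 mg hg; apply/andP; split.
  by apply: integral_ge0 => y /inD /hg /andP[? _]; rewrite lee_fin.
apply: (@le_trans _ _ (\int[mu]_(y in D) (cst 1%E) y)).
  apply: (ge0_le_integral mu mD (f1 := fun y => (g y)%:E) (f2 := cst 1%E)).
  - by move=> y /inD /hg /andP[? _]; rewrite lee_fin.
  - by apply/measurable_realfun.measurable_EFinP.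
  - exact: measurable_cst.
  - by move=> y /inD /hg /andP[_ ?]; rewrite /= lee_fin.
rewrite (integral_cst mu mD) [X in (_ * X)%E](_ : _ = 1%E); last exact: mu1.
by rewrite mule1.
Qed.

Lemma finE (x : \bar R) : 0 <= x <= 1 -> x = (fine x)%:E.
Proof.
move=> /andP[x0 x1]; rewrite fineK // ge0_fin_numE //.
exact: (le_lt_trans x1 (ltry _)).
Qed.

End Main.
Arguments finE {R}.
Arguments int_le1 {R}.
Arguments int_lin {R}.
Arguments mabs {R}.



Lemma key_gen (R : realType) (z p c : R) : 0 <= z <= 1 ->
  p = z * `|3/4 - z| -> c = `|1/4 - z| -> Num.sqrt p <= 9/25 + 19/100 * c.
Proof. by move=> hz -> hc; exact: (@key_ineq R z hz _ _ erefl hc). Qed.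

Definition P0 (R : realType) : profile R 2 := fun j => if j == ord0 then 1/4 else 3/4.

Lemma geoQ1 (R : realType) (y : R) : 0 <= y <= 1 ->
  geo_mean (upd (P0 R) ord0 0) y <= 9/25 + 19/100 * dst (1/4) y.
Proof.
move=> y01.
rewrite /geo_mean !big_ord_recr big_ord0 /= mul1r.
rewrite powR12_sqrt; last by apply: mulr_ge0.
apply: (@key_gen R y); [exact: y01| |by []].
rewrite /upd /P0 /=.
congr (_ * _); rewrite sub0r normrN ger0_norm; first by [].
by case/andP: y01.
Qed.

Lemma geoQ2 (R : realType) (y : R) : 0 <= y <= 1 ->
  geo_mean (upd (P0 R) ord_max 1) y <= 9/25 + 19/100 * dst (3/4) y.
Proof.
move=> y01.
have z01 : 0 <= 1 - y <= 1 by case/andP: y01 => ? ?; apply/andP; split; lra.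
rewrite /geo_mean !big_ord_recr big_ord0 /= mul1r.
rewrite powR12_sqrt; last by apply: mulr_ge0.
apply: (@key_gen R (1 - y)); [exact: z01| |].
  rewrite /upd /P0 /=.
  rewrite mulrC (ger0_norm (_ : 0 <= 1 - y)); last by case/andP: y01 => ? ?; lra.
  congr (_ * _); rewrite -normrN; congr `|_|; lra.
rewrite /dst -normrN; congr `|_|; lra.
Qed.

Lemma dst_bnd (R : realType) (t y : R) : 0 <= t <= 1 -> 0 <= y <= 1 -> 0 <= dst t y <= 1.
Proof.
move=> /andP[t0 t1] /andP[y0 y1]; rewrite /dst.
have [h|h] := lerP 0 (t - y).
- rewrite ger0_norm //; apply/andP; split; lra.
- rewrite ltr0_norm //; apply/andP; split; lra.
Qed.

Lemma dst_sum (R : realType) (y : R) : 0 <= y <= 1 -> 0 <= dst (1/4) y + dst (3/4) y <= 1.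
Proof.
move=> /andP[y0 y1]; rewrite /dst.
have [h|h] := lerP 0 (1/4 - y); have [h'|h'] := lerP 0 (3/4 - y).
- rewrite (ger0_norm h) (ger0_norm h'); apply/andP; split; lra.
- lra.
- rewrite (ltr0_norm h) (ger0_norm h'); apply/andP; split; lra.
- rewrite (ltr0_norm h) (ltr0_norm h'); apply/andP; split; lra.
Qed.

Arguments dst_bnd {R}.
Arguments dst_sum {R}.
Arguments geoQ1 {R}.
Arguments geoQ2 {R}.

Section Main2.
Variable R : realType.
Local Notation D := (`[0%R, 1%R]%classic : set R).

Lemma mgeo (x : profile R 2) : measurable_fun D (geo_mean x).
Proof.
have h1 := measurable_funM (mabs (x (widen_ord (leqnSn 1) ord_max))) (mabs (x ord_max)).
have h2 := measurableT_comp (@measurable_powR R (2%:R^-1)) h1.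
have e : geo_mean x = ((@powR R)^~ (2%:R^-1)) \o (dst (x (widen_ord (leqnSn 1) ord_max)) \* dst (x ord_max)).
  by apply: funext => y; rewrite /geo_mean !big_ord_recr big_ord0 /= mul1r.
rewrite e; exact h2.
Qed.

Local Open Scope ereal_scope.

Lemma util_real (mu : probability R R) (t : R) : mu D = 1 -> (0 <= t <= 1)%R ->
  exists u : R, exp_util mu t = u%:E /\ (0 <= u <= 1)%R.
Proof.
move=> mu1 t01.
have h : 0 <= exp_util mu t <= 1 := @int_le1 R mu (dst t) mu1 (mabs t) (fun y hy => dst_bnd t y t01 hy).
have e := finE _ h.
exists (fine (exp_util mu t)); split; first exact: e.
rewrite e in h; move: h => /andP[h0 h1].
by rewrite -!lee_fin h0 h1.
Qed.

Lemma util_sum (mu : probability R R) : mu D = 1 ->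
  exp_util mu (1/4) + exp_util mu (3/4) <= 1.
Proof.
move=> mu1.
have h := @int_le1 R mu (fun y => dst (1/4) y + dst (3/4) y)%R mu1
  (measurable_funD (mabs _) (mabs _)) (fun y hy => dst_sum y hy).
move: h => /andP[_ h].
rewrite (eq_integral (fun y => (dst (1/4) y)%:E + (dst (3/4) y)%:E)) in h; last first.
  by move=> y _; rewrite EFinD.
rewrite (ge0_integralD mu (mD R) (f1 := fun y => (dst (1/4) y)%:E) (f2 := fun y => (dst (3/4) y)%:E)) in h.
- exact h.
- by move=> y _; rewrite lee_fin; exact: normr_ge0.
- by apply/measurable_EFinP; exact: mabs.
- by move=> y _; rewrite lee_fin; exact: normr_ge0.
- by apply/measurable_EFinP; exact: mabs.
Qed.

Lemma geo_ge0 n (x : profile R n) y : (0 <= geo_mean x y)%R.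
Proof. exact: powR_ge0. Qed.

End Main2.
Lemma fin_le (R : realType) (x : \bar R) (b : R) : (0 <= x)%E -> (x <= b%:E)%E ->
  exists r : R, x = r%:E /\ 0 <= r.
Proof.
move=> x0 xb.
have fx : x \is a fin_num by rewrite ge0_fin_numE //; exact: (le_lt_trans xb (ltry _)).
exists (fine x); split; first by rewrite fineK.
by rewrite -lee_fin fineK.
Qed.

Arguments util_real {R}.
Arguments util_sum {R}.
Arguments mgeo {R}.

Theorem theorem9 (R : realType) (f : mechanism R) :
  mech_on_unit f -> strategyproof f ->
  forall rho : R, approx_at_most f rho -> Num.sqrt (6 / 5) <= rho.
Proof.
move=> Hon Hsp rho Hap.
pose P := P0 R.
pose Q1 := upd P ord0 0.
pose Q2 := upd P ord_max 1.
have vP : valid_profile P.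
  by move=> j; rewrite /P /P0; case: ifP => _; apply/andP; split; lra.
have vQ1 : valid_profile Q1.
  move=> j; rewrite /Q1 /upd; case: ifP => _; last exact: vP.
  by apply/andP; split; lra.
have vQ2 : valid_profile Q2.
  move=> j; rewrite /Q2 /upd; case: ifP => _; last exact: vP.
  by apply/andP; split; lra.
have i0 : (0 <= (0:R) <= 1) by apply/andP; split; lra.
have i1 : (0 <= (1:R) <= 1) by apply/andP; split; lra.
have i14 : (0 <= (1/4:R) <= 1) by apply/andP; split; lra.
have i34 : (0 <= (3/4:R) <= 1) by apply/andP; split; lra.
have sp1 : (exp_util (f 2%N Q1) (1/4) <= exp_util (f 2%N P) (1/4))%E := Hsp 2%N P ord0 0 vP i0.
have sp2 : (exp_util (f 2%N Q2) (3/4) <= exp_util (f 2%N P) (3/4))%E := Hsp 2%N P ord_max 1 vP i1.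
have a1 := Hap 2%N Q1 isT vQ1 1 i1.
have a2 := Hap 2%N Q2 isT vQ2 0 i0.
have g1 : geo_mean Q1 1 = 1/2.
  rewrite /geo_mean !big_ord_recr big_ord0 /= mul1r powR12_sqrt; last by apply: mulr_ge0.
  rewrite /Q1 /upd /P /P0 /=.
  rewrite (_ : `|0 - 1| * `|3 / 4 - 1| = (1/2)^+2); last first.
    rewrite sub0r normrN normr1 mul1r ler0_norm; last by lra.
    by rewrite expr2; lra.
  by rewrite sqrtr_sqr ger0_norm //; lra.
have g2 : geo_mean Q2 0 = 1/2.
  rewrite /geo_mean !big_ord_recr big_ord0 /= mul1r powR12_sqrt; last by apply: mulr_ge0.
  rewrite /Q2 /upd /P /P0 /=.
  rewrite (_ : `|1/4 - 0| * `|1 - 0| = (1/2)^+2); last first.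
    rewrite !subr0 normr1 mulr1 ger0_norm; last by lra.
    by rewrite expr2; lra.
  by rewrite sqrtr_sqr ger0_norm //; lra.
rewrite g1 in a1; rewrite g2 in a2.
have mu1 := Hon 2%N Q1 vQ1.
have mu2 := Hon 2%N Q2 vQ2.
have muP := Hon 2%N P vP.
have a0 : (0 <= 9/25 :> R) by lra.
have b0 : (0 <= 19/100 :> R) by lra.
have b1 : (mech_value f Q1 <= (9/25)%:E + (19/100)%:E * exp_util (f 2%N Q1) (1/4))%E.
  apply: (int_lin (f 2%N Q1) (geo_mean Q1) (1/4) (9/25) (19/100) mu1 a0 b0 (mgeo Q1)).
  by move=> y hy; rewrite geo_ge0 /=; exact: (geoQ1 y hy).
have b2 : (mech_value f Q2 <= (9/25)%:E + (19/100)%:E * exp_util (f 2%N Q2) (3/4))%E.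
  apply: (int_lin (f 2%N Q2) (geo_mean Q2) (3/4) (9/25) (19/100) mu2 a0 b0 (mgeo Q2)).
  by move=> y hy; rewrite geo_ge0 /=; exact: (geoQ2 y hy).
have su := util_sum (f 2%N P) muP.
have [u1 [eu1 u1b]] := util_real (f 2%N Q1) (1/4) mu1 i14.
have [u2 [eu2 u2b]] := util_real (f 2%N Q2) (3/4) mu2 i34.
have [p1 [ep1 p1b]] := util_real (f 2%N P) (1/4) muP i14.
have [p2 [ep2 p2b]] := util_real (f 2%N P) (3/4) muP i34.
rewrite eu1 -EFinM -EFinD in b1.
rewrite eu2 -EFinM -EFinD in b2.
have m10 : (0 <= mech_value f Q1)%E.
  by apply: integral_ge0 => y _; rewrite lee_fin; exact: geo_ge0.
have m20 : (0 <= mech_value f Q2)%E.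
  by apply: integral_ge0 => y _; rewrite lee_fin; exact: geo_ge0.
have [m1 [em1 m1b]] := @fin_le R _ _ m10 b1.
have [m2 [em2 m2b]] := @fin_le R _ _ m20 b2.
rewrite em1 lee_fin in b1; rewrite em2 lee_fin in b2.
rewrite em1 -EFinM lee_fin in a1; rewrite em2 -EFinM lee_fin in a2.
rewrite eu1 ep1 lee_fin in sp1; rewrite eu2 ep2 lee_fin in sp2.
rewrite ep1 ep2 -EFinD lee_fin in su.
have rho_lb : 100/91 <= rho.
  have [rn|rp] := lerP rho 0.
    have : rho * m1 <= 0 by rewrite mulr_le0_ge0.
    lra.
  have h1 : rho * (m1 + m2) <= rho * (91/100).
    by rewrite ler_pM2l //; lra.
  nra.
apply: le_trans rho_lb.
apply: sqrt_le_aux; first lra.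
by rewrite expr2; lra.
Qed.
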